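(* Let $\alpha\in(0,1)$, $0<\varepsilon\le1/4$, a spending sequence $(\varepsilon_t)_{t\ge0}$ and the stopping boundaries $U_t,L_t$ be as in the context, and suppose there exist $\lambda>0$, $q>0$, $T\in\mathbb{N}$ with $\varepsilon_t-\varepsilon_{t-1}\ge\lambda t^{-q}$ for all $t\ge T$. Let $p$ be a $[0,1]$-valued random variable with CDF $F$ that is H\''older continuous with exponent $\xi>0$ in a neighborhood of $\alpha$ (there exist an open interval $V\ni\alpha$ and $c>0$ with $|F(x)-F(y)|\le c|x-y|^\xi$ for $x,y\in V$). Conditionally on $p$, let $X_1,X_2,\dots$ be i.i.d. Bernoulli$(p)$, $S_t=\sum_{j=1}^tX_j$, and $\tau=\inf\{t\in\mathbb{N}:S_t\ge U_t\text{ or }S_t\le L_t\}$. Then for any $\eta\in(0,1)$ there exist constants $\kappa$ and $\tilde T$ such that $\mathbb{P}(\tau>t)\le 2e^{-2t^\eta}+\kappa t^{\xi(\eta-1)/2}$ for all $t\ge\tilde T$. Hence $\mathbb{P}(\tau>t)=o(t^d)$ as $t\to\infty$ for any $d>-\xi/2$.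
   Context: $\mathbb{N}=\{1,2,\dots\}$. A spending sequence is a sequence $(\varepsilon_t)_{t\ge0}$ of reals with $0\le\varepsilon_0\le\varepsilon_1\le\cdots$ and $\varepsilon_t\to\varepsilon$. For $r\in[0,1]$, $\mathbb{P}_r$ denotes a probability under which $X_1,X_2,\dots$ are i.i.d. Bernoulli$(r)$, $S_t=\sum_{j=1}^tX_j$. The stopping boundaries are defined recursively: with $\tau=\inf\{t\in\mathbb{N}:S_t\ge U_t\text{ or }S_t\le L_t\}$ ($\inf\emptyset=\infty$; the events $\{\tau\ge t\}$, $\{\tau<t,S_\tau\ge U_\tau\}$, $\{\tau<t,S_\tau\le L_\tau\}$ only involve $U_s,L_s$, $s<t$), $U_t=\min\{j\in\mathbb{N}:\mathbb{P}_\alpha(\tau\ge t,S_t\ge j)+\mathbb{P}_\alpha(\tau<t,S_\tau\ge U_\tau)\le\varepsilon_t\}$ and $L_t=\max\{j\in\mathbb{Z}:\mathbb{P}_\alpha(\tau\ge t,S_t\le j)+\mathbb{P}_\alpha(\tau<t,S_\tau\le L_\tau)\le\varepsilon_t\}$. *)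

(* Defs.v *)
From HB Require Import structures.
From mathcomp Require Import all_boot all_order all_algebra.
From mathcomp Require Import all_classical all_reals all_analysis.
Set Implicit Arguments. Unset Strict Implicit. Unset Printing Implicit Defensive.
Import Order.TTheory GRing.Theory Num.Theory.
Local Open Scope ring_scope.

(* Bernoulli paths of length t are tuples s : t.-tuple bool; X_j = s_(j-1). *)

Definition Ssum (s : seq bool) (k : nat) : int := (count id (take k s))%:Z.

Section Boundaries.
Variables (U L : nat -> int).

Definition stop_at (s : seq bool) (k : nat) : bool :=
  (U k <= Ssum s k) || (Ssum s k <= L k).

(** no stopping at any time 1..n, i.e. tau > n *)
Definition nostop_upto (s : seq bool) (n : nat) : bool :=
  all (fun k => ~~ stop_at s k) (iota 1 n).

(** tau < t and S_tau >= U_tau *)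
Definition up_before (s : seq bool) (t : nat) : bool :=
  has (fun k => nostop_upto s k.-1 && (U k <= Ssum s k)) (iota 1 t.-1).

(** tau < t and S_tau <= L_tau *)
Definition down_before (s : seq bool) (t : nat) : bool :=
  has (fun k => nostop_upto s k.-1 && (Ssum s k <= L k)) (iota 1 t.-1).
End Boundaries.

Definition Pber {R : realType} (r : R) (t : nat) (A : pred (t.-tuple bool)) : R :=
  \sum_(s : t.-tuple bool | A s) \prod_(x <- s) (if x then r else 1 - r).

Definition condU {R : realType} (a : R) (eps : nat -> R) (U L : nat -> int)
  (t : nat) (j : int) : Prop :=
  Pber a (fun s : t.-tuple bool => nostop_upto U L s t.-1 && (j <= Ssum s t))
  + Pber a (fun s : t.-tuple bool => up_before U L s t) <= eps t.

Definition condL {R : realType} (a : R) (eps : nat -> R) (U L : nat -> int)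
  (t : nat) (j : int) : Prop :=
  Pber a (fun s : t.-tuple bool => nostop_upto U L s t.-1 && (Ssum s t <= j))
  + Pber a (fun s : t.-tuple bool => down_before U L s t) <= eps t.

(** U, L are the stopping boundaries (for t in N = {1,2,...}):
    U_t = min {j in N : condU t j},  L_t = max {j in Z : condL t j}.
    (condU t / condL t only depend on U_s, L_s for s < t.) *)
Definition is_boundaries {R : realType} (a : R) (eps : nat -> R)
  (U L : nat -> int) : Prop :=
  forall t : nat, (0 < t)%N ->
    [/\ 1 <= U t, condU a eps U L t (U t),
        (forall j : int, 1 <= j -> condU a eps U L t j -> U t <= j),
        condL a eps U L t (L t) &
        (forall j : int, condL a eps U L t j -> j <= L t)].

Definition tail_given {R : realType} (U L : nat -> int) (t : nat) (r : R) : R :=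
  Pber r (fun s : t.-tuple bool => nostop_upto U L s t).

(** P(tau > t) when, conditionally on p ~ mu, X_j are i.i.d. Bernoulli(p):
    E[ P_p(tau > t) ] *)
Definition tail_prob {R : realType} (mu : probability R R) (U L : nat -> int)
  (t : nat) : R :=
  fine (\int[mu]_(r in setT) (tail_given U L t r)%:E)%E.

Definition cdf_of {R : realType} (mu : probability R R) (x : R) : R :=
  fine (mu `]-oo, x]%classic).

(* Main.v *)
Require Import Defs.
From HB Require Import structures.
From mathcomp Require Import all_boot all_order all_algebra.
From mathcomp Require Import all_classical all_reals all_analysis.
From mathcomp Require Import measurable_realfun.
From mathcomp Require Import ring lra zify.
From Stdlib Require Import Lia.
Import Order.TTheory GRing.Theory Num.Theory.
Import numFieldNormedType.Exports.
Local Open Scope ring_scope.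

Section Comb.
Variable R : realType.

Lemma sum_rcons n (F : n.+1.-tuple bool -> R) :
  \sum_(s : n.+1.-tuple bool) F s =
  \sum_(s : n.-tuple bool) \sum_(b : bool) F [tuple of rcons s b].
Proof.
rewrite pair_bigA /=.
pose h (p : n.-tuple bool * bool) := [tuple of rcons p.1 p.2].
pose h' (s : n.+1.-tuple bool) :=
  ([tuple of belast (thead s) (behead s)], last (thead s) (behead s)).
have hh' : cancel h' h.
  move=> s; apply: val_inj => /=.
  by rewrite -lastI [in RHS](tuple_eta s).
have h'h : cancel h h'.
  move=> [t b]; apply/eqP; rewrite xpair_eqE.
  have E : rcons (belast (thead (h (t, b))) (behead (h (t, b))))
              (last (thead (h (t, b))) (behead (h (t, b)))) = rcons t b.
    by rewrite -lastI -[RHS]/(val (h (t,b))) [in RHS](tuple_eta (h (t,b))).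
  by case/rcons_inj: E => E1 E2; rewrite -val_eqE /= E1 E2 !eqxx.
rewrite (reindex h) //=.
by exists h' => x _; [apply: h'h | apply: hh'].
Qed.
End Comb.

Section Comb2.
Context {R : realType}.

Definition wt (r : R) (s : seq bool) : R := \prod_(x <- s) (if x then r else 1 - r).

Lemma wt_rcons (r : R) s b : wt r (rcons s b) = wt r s * (if b then r else 1 - r).
Proof. by rewrite /wt -cats1 big_cat big_seq1. Qed.

Lemma wt_ge0 (r : R) s : 0 <= r <= 1 -> 0 <= wt r s.
Proof.
move=> /andP[r0 r1]; rewrite /wt; apply: prodr_ge0 => -[] _ //; lra.
Qed.

Lemma Pber_mkcond (r : R) t (A : pred (t.-tuple bool)) :
  Pber r A = \sum_(s : t.-tuple bool) (if A s then wt r s else 0).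
Proof. by rewrite /Pber big_mkcond. Qed.

Lemma sum_tuple0 (F : 0.-tuple bool -> R) : \sum_(s : 0.-tuple bool) F s = F [tuple].
Proof.
rewrite (big_pred1 [tuple]) // => s /=; apply/esym/eqP; exact: tuple0.
Qed.

Lemma sum_prod_pow n (f : bool -> R) :
  \sum_(s : n.-tuple bool) \prod_(x <- s) f x = (f true + f false) ^+ n.
Proof.
elim: n => [|n IH]; first by rewrite sum_tuple0 big_nil expr0.
rewrite sum_rcons exprSr -IH mulr_suml; apply: eq_bigr => s _.
rewrite big_bool /= -!cats1 !big_cat !big_seq1 /=; ring.
Qed.

Lemma Pber_take (r : R) n (E : pred (seq bool)) :
  Pber r (fun s : n.+1.-tuple bool => E (take n s)) = Pber r (fun s : n.-tuple bool => E s).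
Proof.
rewrite !Pber_mkcond sum_rcons; apply: eq_bigr => s _.
rewrite big_bool /= !wt_rcons.
have -> : take n (rcons s true) = s by rewrite -cats1 take_size_cat ?size_tuple.
have -> : take n (rcons s false) = s by rewrite -cats1 take_size_cat ?size_tuple.
by case: (E s) => //; rewrite ?addr0 //; ring.
Qed.

Lemma Pber_ge0 (r : R) t (A : pred (t.-tuple bool)) : 0 <= r <= 1 -> 0 <= Pber r A.
Proof. by move=> hr; apply: sumr_ge0 => s _; exact: wt_ge0. Qed.

Lemma Pber_le (r : R) t (A B : pred (t.-tuple bool)) : 0 <= r <= 1 ->
  (forall s, A s -> B s) -> Pber r A <= Pber r B.
Proof.
move=> hr AB; rewrite !Pber_mkcond; apply: ler_sum => s _.
case As: (A s); first by rewrite (AB _ As).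
by case: (B s) => //; exact: wt_ge0.
Qed.

Lemma Pber_or (r : R) t (A B : pred (t.-tuple bool)) : 0 <= r <= 1 ->
  Pber r (fun s => A s || B s) <= Pber r A + Pber r B.
Proof.
move=> hr; rewrite !Pber_mkcond -big_split /=; apply: ler_sum => s _.
have := @wt_ge0 r s hr.
by case: (A s); case: (B s) => /= h; lra.
Qed.

Lemma Pber_all (r : R) t : Pber r (fun s : t.-tuple bool => true) = 1.
Proof. by rewrite /Pber sum_prod_pow /= addrC subrK expr1n. Qed.

Lemma Pber_le1 (r : R) t (A : pred (t.-tuple bool)) : 0 <= r <= 1 -> Pber r A <= 1.
Proof. by move=> hr; rewrite -(Pber_all r t); apply: Pber_le. Qed.

End Comb2.
Arguments wt {R}.

Section Chernoff.
Context {R : realType}.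

Lemma exp_quad (l : R) : -(1/2) <= l <= 1/2 -> expR l <= 1 + l + 2 * l^+2.
Proof.
move=> /andP[h1 h2].
have e1 := expR_ge1Dx (- l).
have pos : 0 < 1 - l by lra.
have el : expR l * expR (- l) = 1 by rewrite -expRD subrr expR0.
have ep := expR_gt0 l.
have : expR l * (1 - l) <= 1.
  by rewrite -el ler_wpM2l ?(ltW ep) //; lra.
move=> h.
have h3 : 1 <= (1 + l + 2 * l ^+ 2) * (1 - l).
  have : 0 <= l^+2 * (1 - 2 * l) by apply: mulr_ge0; [exact: sqr_ge0|lra].
  move=> hh; nra.
nra.
Qed.

Lemma Ssum_tuple t (s : t.-tuple bool) : Ssum s t = (count id s)%:Z.
Proof. by rewrite /Ssum take_oversize ?size_tuple. Qed.

Lemma wt_exp (r l : R) (s : seq bool) :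
  wt r s * expR (l * (count id s)%:R) =
  \prod_(x <- s) (if x then r * expR l else 1 - r).
Proof.
elim: s => [|x s IH]; first by rewrite /wt !big_nil /= mulr0 expR0 mulr1.
rewrite /wt !big_cons -IH /wt /=.
case: x => /=.
  by rewrite -add1n natrD mulrDr mulr1 expRD; ring.
by rewrite add0n; ring.
Qed.

Lemma mgf (r l : R) t :
  \sum_(s : t.-tuple bool) wt r s * expR (l * (count id s)%:R) =
  (1 - r + r * expR l) ^+ t.
Proof.
under eq_bigr do rewrite wt_exp.
by rewrite sum_prod_pow addrC.
Qed.

Lemma mgf_le (r l : R) t : 0 <= r <= 1 -> -(1/2) <= l <= 1/2 ->
  (1 - r + r * expR l) ^+ t <= expR (t%:R * (r * l + 2 * l ^+ 2)).
Proof.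
move=> /andP[r0 r1] hl.
rewrite expRM_natl; apply: lerXn2r.
- by rewrite nnegrE; have := expR_gt0 l; nra.
- by rewrite nnegrE; exact: ltW (expR_gt0 _).
have := exp_quad l hl; have := expR_ge1Dx (r * l + 2 * l ^+ 2).
have : 0 <= l ^+ 2 by exact: sqr_ge0.
move=> h1 h2 h3; nra.
Qed.

Lemma chernoff_gen (r l c : R) t (A : pred (t.-tuple bool)) :
  0 <= r <= 1 -> -(1/2) <= l <= 1/2 ->
  (forall s, A s -> 0 <= l * ((count id s)%:R - c)) ->
  Pber r A <= expR (- (l * c) + t%:R * (r * l + 2 * l ^+ 2)).
Proof.
move=> hr hl hA.
apply: le_trans (_ : \sum_(s : t.-tuple bool) wt r s * expR (l * ((count id s)%:R - c)) <= _).
  rewrite Pber_mkcond; apply: ler_sum => s _.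
  have w0 := @wt_ge0 _ r s hr.
  case As: (A s).
    have := expR_ge0 (l * ((count id s)%:R - c)).
    have e1 : 1 <= expR (l * ((count id s)%:R - c)).
      by rewrite -[X in X <= _]expR0 ler_expR; apply: hA; rewrite As.
    by move=> _; rewrite -{1}[wt r s]mulr1 ler_wpM2l.
  by apply: mulr_ge0 => //; exact: expR_ge0.
under eq_bigr do rewrite mulrBr expRD mulrA.
rewrite -mulr_suml mgf expRD mulrC; apply: ler_wpM2l; first exact: expR_ge0.
exact: mgf_le.
Qed.

End Chernoff.

Section Chernoff2.
Context {R : realType}.

Lemma intrnat (n : nat) : ((n%:Z)%:~R : R) = n%:R.
Proof. by []. Qed.

Lemma chern_up (r x : R) t : 0 <= r <= 1 -> (0 < t)%N -> 0 <= x <= 2 * t%:R ->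
  Pber r (fun s : t.-tuple bool => r * t%:R + x <= (Ssum s t)%:~R)
  <= expR (- (x ^+ 2 / (8 * t%:R))).
Proof.
move=> hr t0 /andP[x0 x1].
have tp : (0 : R) < t%:R by rewrite ltr0n.
set l := x / (4 * t%:R).
have l0 : 0 <= l by rewrite /l divr_ge0 //; lra.
have l1 : l <= 1/2.
  by rewrite /l ler_pdivrMr; lra.
apply: le_trans (@chernoff_gen R r l (r * t%:R + x) t _ hr _ _) _.
- by apply/andP; split; lra.
- move=> s; rewrite Ssum_tuple intrnat => h; apply: mulr_ge0 => //; lra.
rewrite le_eqVlt; apply/orP; left; apply/eqP; congr expR.
rewrite /l; field; lra.
Qed.

Lemma chern_down (r x : R) t : 0 <= r <= 1 -> (0 < t)%N -> 0 <= x <= 2 * t%:R ->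
  Pber r (fun s : t.-tuple bool => (Ssum s t)%:~R <= r * t%:R - x)
  <= expR (- (x ^+ 2 / (8 * t%:R))).
Proof.
move=> hr t0 /andP[x0 x1].
have tp : (0 : R) < t%:R by rewrite ltr0n.
set l := - (x / (4 * t%:R)).
have l0 : 0 <= x / (4 * t%:R) by rewrite divr_ge0 //; lra.
have l1 : x / (4 * t%:R) <= 1/2.
  by rewrite ler_pdivrMr; lra.
apply: le_trans (@chernoff_gen R r l (r * t%:R - x) t _ hr _ _) _.
- by rewrite /l; apply/andP; split; lra.
- move=> s; rewrite Ssum_tuple intrnat => h; rewrite /l mulNr -mulrN.
  apply: mulr_ge0 => //; lra.
rewrite le_eqVlt; apply/orP; left; apply/eqP; congr expR.
rewrite /l; field; lra.
Qed.

End Chernoff2.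

Section Seqs.
Variables (U L : nat -> int).

Lemma Ssum_take k u s : (k <= u)%N -> Ssum (take u s) k = Ssum s k.
Proof. by move=> ku; rewrite /Ssum take_takel. Qed.

Lemma nostop_take n u s : (n <= u)%N -> nostop_upto U L (take u s) n = nostop_upto U L s n.
Proof.
move=> nu; apply: eq_in_all => k; rewrite mem_iota => /andP[_ kn].
by rewrite /stop_at Ssum_take //; lia.
Qed.

Lemma up_before_take u s : up_before U L (take u s) u.+1 = up_before U L s u.+1.
Proof.
apply: eq_in_has => k; rewrite mem_iota => /andP[k1 kn] /=.
by rewrite nostop_take ?Ssum_take //; lia.
Qed.

Lemma down_before_take u s : down_before U L (take u s) u.+1 = down_before U L s u.+1.
Proof.
apply: eq_in_has => k; rewrite mem_iota => /andP[k1 kn] /=.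
by rewrite nostop_take ?Ssum_take //; lia.
Qed.

Lemma iota_last u : (0 < u)%N -> iota 1 u = iota 1 u.-1 ++ [:: u].
Proof.
by case: u => // u _; rewrite -{1}[u.+1]addn1 iotaD /= add1n.
Qed.

Lemma up_before_succ u s : (0 < u)%N ->
  up_before U L s u.+1 = up_before U L s u || (nostop_upto U L s u.-1 && (U u <= Ssum s u)).
Proof. by move=> u0; rewrite /up_before /= iota_last // has_cat /= orbF. Qed.

Lemma down_before_succ u s : (0 < u)%N ->
  down_before U L s u.+1 = down_before U L s u || (nostop_upto U L s u.-1 && (Ssum s u <= L u)).
Proof. by move=> u0; rewrite /down_before /= iota_last // has_cat /= orbF. Qed.

Lemma nostop_last s t : (0 < t)%N -> nostop_upto U L s t -> ~~ stop_at U L s t.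
Proof.
move=> t0 /allP; apply; by rewrite mem_iota; lia.
Qed.

End Seqs.

Section Bound.
Context {R : realType}.
Variables (a : R) (eps : nat -> R) (U L : nat -> int).
Hypothesis Hb : is_boundaries a eps U L.
Hypothesis ha : 0 <= a <= 1.
Hypothesis he0 : 0 <= eps 0%N.

Lemma Pber_ext t (A B : pred (t.-tuple bool)) : (forall s, A s = B s) -> Pber a A = Pber a B.
Proof. by move=> h; apply: eq_bigl. Qed.

Lemma Pber_false t : Pber a (fun _ : t.-tuple bool => false) = 0.
Proof. by rewrite /Pber big_pred0. Qed.

Lemma up_before_le t : (0 < t)%N ->
  Pber a (fun s : t.-tuple bool => up_before U L s t) <= eps t.-1.
Proof.
case: t => // -[|u] _.
  by rewrite (_ : Pber _ _ = 0) // -(Pber_false 1); apply: eq_bigl.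
have := Hb u.+1 isT; case=> _ hU _ _ _.
rewrite /condU in hU.
rewrite (@Pber_ext _ _ (fun s => up_before U L (take u.+1 s) u.+2)); last first.
  by move=> s; rewrite up_before_take.
rewrite (@Pber_take _ a u.+1 (fun s => up_before U L s u.+2)) /=.
rewrite (@Pber_ext _ _ (fun s => up_before U L s u.+1 || (nostop_upto U L s u && (U u.+1 <= Ssum s u.+1)))); last first.
  by move=> s; rewrite up_before_succ.
apply: le_trans; first exact: Pber_or.
by rewrite addrC.
Qed.

Lemma down_before_le t : (0 < t)%N ->
  Pber a (fun s : t.-tuple bool => down_before U L s t) <= eps t.-1.
Proof.
case: t => // -[|u] _.
  by rewrite (_ : Pber _ _ = 0) // -(Pber_false 1); apply: eq_bigl.
have := Hb u.+1 isT; case=> _ _ _ hL _.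
rewrite /condL in hL.
rewrite (@Pber_ext _ _ (fun s => down_before U L (take u.+1 s) u.+2)); last first.
  by move=> s; rewrite down_before_take.
rewrite (@Pber_take _ a u.+1 (fun s => down_before U L s u.+2)) /=.
rewrite (@Pber_ext _ _ (fun s => down_before U L s u.+1 || (nostop_upto U L s u && (Ssum s u.+1 <= L u.+1)))); last first.
  by move=> s; rewrite down_before_succ.
apply: le_trans; first exact: Pber_or.
by rewrite addrC.
Qed.

Lemma nostop_lt t (x : R) (s : t.-tuple bool) : (0 < t)%N -> 1 <= x ->
  Pber a (fun s : t.-tuple bool => x <= (Ssum s t)%:~R) <= eps t - eps t.-1 ->
  nostop_upto U L s t -> (Ssum s t)%:~R < x.
Proof.
move=> t0 x1 hP hn; rewrite ltNge; apply/negP => hx.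
have := @nostop_last U L s t t0 hn; rewrite /stop_at negb_or => /andP[/negP hU _].
apply: hU.
have [_ _ hmin _ _] := Hb t t0.
apply: hmin.
  by rewrite -(ler_int R); apply: le_trans hx.
rewrite /condU.
have h1 := up_before_le t t0.
have h2 : Pber a (fun s0 : t.-tuple bool =>
            nostop_upto U L s0 t.-1 && (Ssum s t <= Ssum s0 t))
          <= Pber a (fun s : t.-tuple bool => x <= (Ssum s t)%:~R).
  apply: Pber_le => // s0 /andP[_ h]; apply: le_trans hx _.
  by rewrite ler_int.
lra.
Qed.

Lemma nostop_gt t (x : R) (s : t.-tuple bool) : (0 < t)%N ->
  Pber a (fun s : t.-tuple bool => (Ssum s t)%:~R <= x) <= eps t - eps t.-1 ->
  nostop_upto U L s t -> x < (Ssum s t)%:~R.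
Proof.
move=> t0 hP hn; rewrite ltNge; apply/negP => hx.
have := @nostop_last U L s t t0 hn; rewrite /stop_at negb_or => /andP[_ /negP hL].
apply: hL.
have [_ _ _ _ hmax] := Hb t t0.
apply: hmax.
rewrite /condL.
have h1 := down_before_le t t0.
have h2 : Pber a (fun s0 : t.-tuple bool =>
            nostop_upto U L s0 t.-1 && (Ssum s0 t <= Ssum s t))
          <= Pber a (fun s : t.-tuple bool => (Ssum s t)%:~R <= x).
  apply: Pber_le => // s0 /andP[_ h]; apply: le_trans _ hx.
  by rewrite ler_int.
lra.
Qed.

End Bound.

Section Meas2.
Context {R : realType}.

Lemma Pber_measurableX t (A : pred (t.-tuple bool)) :
  measurable_fun setT (fun r : R => Pber r A).
Proof.
under eq_fun do rewrite Pber_mkcond.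
apply: measurable_sum => s.
case: (A s); last exact: measurable_cst.
apply: measurable_prod => -[] _.
  exact: measurable_id.
by apply: measurable_funB; [exact: measurable_cst | exact: measurable_id].
Qed.

End Meas2.

Section Point.
Context {R : realType}.

Definition Hyps (a : R) (eps : nat -> R) (U L : nat -> int) (t : nat) (x : R) :=
  [/\ is_boundaries a eps U L, 0 <= a <= 1, 0 <= eps 0%N, (0 < t)%N &
   [/\ 1 <= x, x <= t%:R & expR (- (x ^+ 2 / (8 * t%:R))) <= eps t - eps t.-1]].

Lemma tail_le1 (U L : nat -> int) t (r : R) : 0 <= r <= 1 -> 0 <= tail_given U L t r <= 1.
Proof. by move=> hr; rewrite Pber_ge0 ?Pber_le1. Qed.

Lemma nostop_band a eps U L t x (s : t.-tuple bool) : Hyps a eps U L t x -> nostop_upto U L s t ->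
  a * t%:R - x < (Ssum s t)%:~R < a * t%:R + x.
Proof.
move=> [Hb ha he0 t0 [x1 xt hinc]] hn; have tp : (0 : R) < t%:R by rewrite ltr0n.
have hx : 0 <= x <= 2 * t%:R by apply/andP; split; lra.
have hat : 0 <= a * t%:R by apply: mulr_ge0; [case/andP: ha|rewrite ler0n].
have hx1 : 1 <= a * t%:R + x by lra.
apply/andP; split.
- apply: (@nostop_gt R a eps U L Hb ha he0 t _ s t0 _ hn).
  by apply: le_trans hinc; apply: chern_down.
- apply: (@nostop_lt R a eps U L Hb ha he0 t _ s t0 hx1 _ hn).
  by apply: le_trans hinc; apply: chern_up.
Qed.

Lemma tail_far_up a eps U L t x (r : R) : Hyps a eps U L t x -> 0 <= r <= 1 -> a + 2 * x / t%:R <= r ->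
  tail_given U L t r <= expR (- (x ^+ 2 / (8 * t%:R))).
Proof.
move=> H hr har; have [Hb ha he0 t0 [x1 xt hinc]] := H.
have tp : (0 : R) < t%:R by rewrite ltr0n.
set y := r * t%:R - a * t%:R - x.
have hy : x <= y.
  rewrite /y; have : 2 * x / t%:R * t%:R <= (r - a) * t%:R.
    by rewrite ler_pM2r //; lra.
  by rewrite divfK ?gt_eqF //; lra.
have y2 : y <= 2 * t%:R.
  rewrite /y; have : r * t%:R <= t%:R by rewrite ler_piMl //; case/andP: hr.
  have : 0 <= a * t%:R by apply: mulr_ge0; [case/andP: ha|rewrite ler0n].
  lra.
apply: le_trans (_ : Pber r (fun s : t.-tuple bool => (Ssum s t)%:~R <= r * t%:R - y) <= _).
  apply: Pber_le => // s hs; have /andP[_ h] := @nostop_band a eps U L t x s H hs; rewrite /y; lra.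
apply: le_trans (@chern_down R r y t hr t0 _) _.
  by apply/andP; split; lra.
rewrite ler_expR lerN2 ler_pM2r ?invr_gt0 ?mulr_gt0 //.
by apply: lerXn2r; rewrite ?nnegrE; lra.
Qed.

Lemma tail_far_down a eps U L t x (r : R) : Hyps a eps U L t x -> 0 <= r <= 1 -> r <= a - 2 * x / t%:R ->
  tail_given U L t r <= expR (- (x ^+ 2 / (8 * t%:R))).
Proof.
move=> H hr har; have [Hb ha he0 t0 [x1 xt hinc]] := H.
have tp : (0 : R) < t%:R by rewrite ltr0n.
set y := a * t%:R - r * t%:R - x.
have hy : x <= y.
  rewrite /y; have : 2 * x / t%:R * t%:R <= (a - r) * t%:R.
    by rewrite ler_pM2r //; lra.
  by rewrite divfK ?gt_eqF //; lra.
have y2 : y <= 2 * t%:R.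
  rewrite /y; have : a * t%:R <= t%:R by rewrite ler_piMl //; case/andP: ha.
  have : 0 <= r * t%:R by apply: mulr_ge0; [case/andP: hr|rewrite ler0n].
  lra.
apply: le_trans (_ : Pber r (fun s : t.-tuple bool => r * t%:R + y <= (Ssum s t)%:~R) <= _).
  apply: Pber_le => // s hs; have /andP[h _] := @nostop_band a eps U L t x s H hs; rewrite /y; lra.
apply: le_trans (@chern_up R r y t hr t0 _) _.
  by apply/andP; split; lra.
rewrite ler_expR lerN2 ler_pM2r ?invr_gt0 ?mulr_gt0 //.
by apply: lerXn2r; rewrite ?nnegrE; lra.
Qed.

End Point.

Section Meas.
Context {R : realType}.
Variable mu : probability R R.
Local Open Scope classical_set_scope.

Lemma mu_fin (A : set R) : measurable A -> mu A \is a fin_num.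
Proof. move=> mA; exact: fin_num_measure. Qed.

Lemma mu_ge0' (A : set R) : (0 <= mu A)%E.
Proof. exact: measure_ge0. Qed.

Lemma compl01 : mu `[0, 1]%classic = 1%E -> mu (~` `[(0:R), 1]%classic) = 0%E.
Proof.
move=> h.
have m01 : measurable (`[(0:R), 1]%classic) by exact: measurable_itv.
by rewrite probability_setC // h subee.
Qed.


Lemma fine_bound (X : \bar R) (y : R) : (0 <= X)%E -> (X <= y%:E)%E -> 0 <= fine X <= y.
Proof.
case: X => [x| |] //=; rewrite ?lee_fin.
by move=> h1 h2; apply/andP.
Qed.

Lemma integral_bound (f : R -> R) (N : set R) (e : R) :
  mu `[0, 1]%classic = 1%E -> measurable_fun setT f -> measurable N -> 0 <= e ->
  (forall r, 0 <= r <= 1 -> 0 <= f r <= 1) ->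
  (forall r, 0 <= r <= 1 -> ~ N r -> f r <= e) ->
  0 <= fine (\int[mu]_(r in setT) (f r)%:E) <= fine (mu N) + e.
Proof.
move=> h01 mf mN e0 hf hfe.
set D := `[(0:R), 1]%classic.
have mD : measurable D by exact: measurable_itv.
have mEf : measurable_fun (setT : set R) (EFin \o f) by exact: measurableT_comp.
have Dr : forall r, D r -> 0 <= r <= 1.
  by move=> r; rewrite /D /= in_itv.
have -> : (\int[mu]_(r in setT) (f r)%:E = \int[mu]_(r in D) (f r)%:E)%E.
  rewrite -(setUv D) integral_setU //; first last.
  - by apply/disj_setPCl.
  - exact: measurable_funTS.
  - exact: measurableC.
  rewrite (@null_set_integral _ _ _ mu (~` D)) ?adde0 //.
  - exact: measurableC.
  - exact: measurable_funTS.
  - exact: compl01.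
apply: fine_bound.
  by apply: integral_ge0 => r /Dr /hf /andP[h _]; rewrite lee_fin.
apply: (@le_trans _ _ (\int[mu]_(r in D) ((\1_N r)%:E + e%:E))%E).
  apply: ge0_le_integral => //.
  - by move=> r /Dr /hf /andP[h _]; rewrite lee_fin.
  - exact: measurable_funTS.
  - apply/measurable_EFinP => /=.
    by apply: measurable_funD => //; exact: measurable_indic.
  move=> r rD; rewrite -EFinD lee_fin indicE.
  have [/andP[f0 f1] fe] := (hf r (Dr r rD), hfe r (Dr r rD)).
  case: (boolP (r \in N)) => rN /=.
    by apply: le_trans f1 _; lra.
  rewrite add0r; apply: fe => Nr; move/negP: rN; by rewrite in_setE.
rewrite ge0_integralD //; last first.
  by apply/measurable_EFinP; exact: measurable_indic.
rewrite integral_indic // integral_cst //.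
have hD : forall Y : \bar R, Y = mu `[(0:R), 1]%classic -> Y = 1%E by move=> Y ->.
rewrite [X in (_ * X)%E]hD; last by [].
rewrite mule1 EFinD.
apply: leeD => //.
rewrite fineK ?mu_fin //.
by apply: le_measure; rewrite ?inE //; exact: measurableI.
Qed.


Lemma mu_oo_cdf (x y : R) : x <= y ->
  fine (mu `]x, y[%classic) <= cdf_of mu y - cdf_of mu x.
Proof.
move=> xy.
have hU : `]-oo, y]%classic = `]-oo, x]%classic `|` `]x, y]%classic.
  by apply: itv_bndbnd_setU; rewrite bnd_simp.
have hI : `]-oo, x]%classic `&` `]x, y]%classic = set0 :> set R.
  apply/seteqP; split => z //=; rewrite !in_itv /= => -[h1 /andP[h2 _]].
  by move: (lt_le_trans h2 h1); rewrite ltxx.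
have mA : measurable (`]-oo, x]%classic : set R) by exact: measurable_itv.
have mB : measurable (`]x, y]%classic : set R) by exact: measurable_itv.
have := @measureU _ _ _ mu _ _ mA mB hI; rewrite -hU => hm.
rewrite /cdf_of.
have -> : fine (mu `]-oo, y]%classic) = fine (mu `]-oo, x]%classic) + fine (mu `]x, y]%classic).
  by rewrite -fineD ?mu_fin //; congr fine; exact: hm.
rewrite addrAC subrr add0r.
apply: fine_le; rewrite ?mu_fin //; try exact: measurable_itv.
apply: le_measure; rewrite ?inE; try exact: measurable_itv.
by apply: subset_itvl; rewrite bnd_simp.
Qed.

End Meas.

Definition ev (P : nat -> Prop) := exists N, forall t, (N <= t)%N -> P t.

Lemma ev_and (P Q : nat -> Prop) : ev P -> ev Q -> ev (fun t => P t /\ Q t).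
Proof.
move=> [N hN] [M hM]; exists (maxn N M) => t ht; split.
  by apply: hN; lia.
by apply: hM; lia.
Qed.

Lemma ev_ge N : ev (fun t => (N <= t)%N).
Proof. by exists N. Qed.

Lemma ev_impl (P Q : nat -> Prop) : ev P -> (forall t, P t -> Q t) -> ev Q.
Proof. by move=> [N hN] h; exists N => t /hN /h. Qed.

Arguments ev_and {P Q}.
Arguments ev_impl {P Q}.

Section Asym.
Context {R : realType}.

Lemma ev_real (K : R) : ev (fun t => K <= t%:R).
Proof.
have h0 : 0 <= Num.max K 0 by rewrite le_max lexx orbT.
have := archi_boundP h0; set N := Num.Def.archi_bound _ => hN.
exists N => t ht.
have h1 : K <= Num.max K 0 by rewrite le_max lexx.
have h2 : (N%:R : R) <= t%:R by rewrite ler_nat.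
lra.
Qed.

Lemma ev_powneg (e eps : R) : 0 < e -> 0 < eps -> ev (fun t => t%:R `^ (- e) <= eps).
Proof.
move=> e0 eps0.
have := ev_and (ev_real ((eps^-1) `^ (e^-1))) (ev_ge 1).
move=> /ev_impl; apply => t [ht t1].
have tp : (0 : R) < t%:R by rewrite ltr0n.
rewrite powRN -[eps]invrK lef_pV2 ?posrE ?invr_gt0 ?powR_gt0 //.
have hn1 : (eps^-1) `^ (e^-1) \in Num.nneg by rewrite nnegrE powR_ge0.
have hn2 : (t%:R : R) \in Num.nneg by rewrite nnegrE ltW.
have := @ge0_ler_powR R e (ltW e0) _ _ hn1 hn2 ht.
by rewrite -powRrM mulVf ?gt_eqF // powRr1 // invr_ge0 ltW.
Qed.


Lemma ev_expdecay (eta m C : R) : 0 < eta -> 0 <= m -> 0 < C ->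
  ev (fun t => expR (- (t%:R `^ eta / 8)) <= C * t%:R `^ (- m)).
Proof.
move=> eta0 m0 C0.
have hq : 0 <= (m + 1) / eta by rewrite divr_ge0 //; lra.
have := archi_boundP hq; set n := Num.Def.archi_bound _ => hn.
set k := n.+1.
set K : R := k`!%:R * 8 ^+ k.
have K0 : 0 < K by rewrite /K mulr_gt0 ?exprn_gt0 ?ltr0n ?fact_gt0.
have hk : m + 1 <= eta * k%:R.
  have : (m + 1) / eta * eta < n%:R * eta by rewrite ltr_pM2r.
  rewrite divfK ?gt_eqF // => h.
  have : (n%:R : R) <= k%:R by rewrite ler_nat /k.
  nra.
have := ev_and (ev_real (K / C)) (ev_ge 1).
move=> /ev_impl; apply => t [ht t1].
have tp : (0 : R) < t%:R by rewrite ltr0n.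
have t1r : (1 : R) <= t%:R by rewrite ler1n.
set y := t%:R `^ eta / 8.
have y0 : 0 <= y by rewrite /y divr_ge0 ?powR_ge0.
have e1 := @expR_ge1Dxn R y n y0.
have yk : y ^+ k = t%:R `^ (eta * k%:R) / 8 ^+ k.
  by rewrite /y expr_div_n -powR_mulrn ?powR_ge0 // -powRrM.
have pk : 0 < t%:R `^ (eta * k%:R) by rewrite powR_gt0.
have hexp : expR (- y) <= K * (t%:R `^ (eta * k%:R))^-1.
  rewrite expRN.
  have h1 : y ^+ k / k`!%:R <= expR y.
    by apply: le_trans e1; rewrite lerDr.
  have h2 : 0 < y ^+ k / k`!%:R.
    by rewrite yk !divr_gt0 ?exprn_gt0 ?ltr0n ?fact_gt0.
  apply: le_trans (_ : (y ^+ k / k`!%:R)^-1 <= _).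
    by rewrite lef_pV2 ?posrE ?expR_gt0.
  have EE : forall P F E : R, P != 0 -> F != 0 -> E != 0 -> (P / E / F)^-1 = F * E * P^-1.
    move=> P F E hP hF hE; rewrite !invfM !invrK; ring.
  rewrite yk EE ?gt_eqF ?exprn_gt0 ?ltr0n ?fact_gt0 //.
apply: le_trans hexp _.
have h3 : t%:R `^ (- (eta * k%:R)) <= t%:R `^ (- (m + 1)).
  by apply: ler_powR => //; lra.
rewrite -powRN.
have h4 : t%:R `^ (- (m + 1)) = t%:R `^ (- m) * t%:R^-1.
  rewrite opprD powRD; first by rewrite powR_inv1 // ltW.
  by apply/implyP => _; rewrite gt_eqF.
have pm : 0 < t%:R `^ (- m) by rewrite powR_gt0.
have h5 : K * t%:R^-1 <= C.
  by rewrite ler_pdivrMr //; move: ht; rewrite ler_pdivrMr // mulrC.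
apply: le_trans (_ : K * (t%:R `^ (- m) * t%:R^-1) <= _).
  by rewrite -h4 ler_wpM2l // ltW.
rewrite mulrCA mulrC ler_wpM2r //; exact: ltW.
Qed.

End Asym.

Lemma powR_sq {R : realType} (t p : R) : 0 < t -> (t `^ p) ^+ 2 = t `^ (p * 2).
Proof. by move=> t0; rewrite -powR_mulrn ?powR_ge0 // -powRrM. Qed.

Lemma core {R : realType} (alpha : R) (eps : nat -> R)
  (U L : nat -> int) (lam q : R) (T : nat)
  (mu : probability R R) (xi : R) :
  0 < alpha < 1 ->
  0 <= eps 0%N ->
  is_boundaries alpha eps U L ->
  0 < lam -> 0 < q ->
  (forall t : nat, (T <= t)%N -> lam * (t%:R `^ (- q)) <= eps t - eps t.-1) ->
  mu `[0, 1]%classic = 1%E ->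
  0 < xi ->
  (exists a b c : R, [/\ a < alpha < b, 0 < c &
     forall x y : R, a < x < b -> a < y < b ->
       `|cdf_of mu x - cdf_of mu y| <= c * `|x - y| `^ xi]) ->
  forall eta : R, 0 < eta < 1 ->
  exists K : R, 0 <= K /\ ev (fun t => 0 <= tail_prob mu U L t <= K * t%:R `^ (xi * (eta - 1) / 2)).
Proof.
move=> /andP[al0 al1] he0 Hb lam0 q0 hinc h01 xi0 [a0 [b0 [c [/andP[ha0 hb0] c0 hold]]]] eta /andP[eta0 eta1].
set p := (1 + eta) / 2.
set rho := (eta - 1) / 2.
set eps0 := Num.min (alpha - a0) (b0 - alpha) / 4.
have eps0p : 0 < eps0.
  by rewrite /eps0 divr_gt0 // lt_min; apply/andP; split; lra.
exists (c * 4 `^ xi + 1); split.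
  by apply: addr_ge0 => //; apply: mulr_ge0; [exact: ltW | exact: powR_ge0].
have E1 := @ev_expdecay R eta q lam eta0 (ltW q0) lam0.
have m0 : 0 <= xi * (1 - eta) / 2 by apply: divr_ge0 => //; apply: mulr_ge0; lra.
have E2 := @ev_expdecay R eta _ 1 eta0 m0 ltr01.
have E3 := @ev_powneg R ((1 - eta) / 2) eps0 ltac:(apply: divr_gt0; lra) eps0p.
have := ev_and (ev_and E1 E2) (ev_and E3 (ev_and (ev_ge T) (ev_ge 1))).
move=> /ev_impl; apply => t [[g1 g2] [g3 [tT t1]]].
have tp : (0 : R) < t%:R by rewrite ltr0n.
have t1r : (1 : R) <= t%:R by rewrite ler1n.
have t0 : (0 < t)%N by [].
set x := t%:R `^ p.
have x1 : 1 <= x.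
  rewrite /x -{1}(powRr0 t%:R); apply: ler_powR => //; rewrite /p; lra.
have xt : x <= t%:R.
  rewrite /x -{2}(powRr1 (ltW tp)); apply: ler_powR => //; rewrite /p; lra.
have hx2 : x ^+ 2 / (8 * t%:R) = t%:R `^ eta / 8.
  rewrite /x powR_sq // (_ : p * 2 = 1 + eta); last by rewrite /p; field.
  rewrite powRD; last by apply/implyP => _; rewrite gt_eqF.
  rewrite powRr1 ?ltW //; field; rewrite gt_eqF //.
have hinc' : expR (- (x ^+ 2 / (8 * t%:R))) <= eps t - eps t.-1.
  by rewrite hx2; apply: le_trans g1 (hinc t tT).
have ha : 0 <= alpha <= 1 by apply/andP; split; lra.
have H : Hyps alpha eps U L t x by split.
have hdelta : 2 * x / t%:R = 2 * t%:R `^ rho.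
  rewrite /x -mulrA; congr (_ * _).
  rewrite (_ : rho = p + (-1)); last by rewrite /rho /p; field.
  rewrite powRD; last by apply/implyP => _; rewrite gt_eqF.
  by rewrite powR_inv1 // ltW.
set del := 2 * t%:R `^ rho.
have del0 : 0 <= del by rewrite /del mulr_ge0 ?powR_ge0.
have delsmall : t%:R `^ rho <= eps0.
  by move: g3; rewrite (_ : - ((1 - eta) / 2) = rho) //; rewrite /rho; field.
set e := expR (- (x ^+ 2 / (8 * t%:R))).
set N := `]alpha - del, alpha + del[%classic.
have mf : measurable_fun setT (tail_given U L t : R -> R).
  exact: Pber_measurableX.
have mN : measurable N by exact: measurable_itv.
have hf : forall r : R, 0 <= r <= 1 -> 0 <= tail_given U L t r <= 1.
  by move=> r hr; exact: tail_le1.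
have hfe : forall r : R, 0 <= r <= 1 -> ~ N r -> tail_given U L t r <= e.
  move=> r hr hN.
  have [hr1|hr1] := leP r (alpha - del).
    by apply: (@tail_far_down R alpha eps U L t x r H hr); rewrite hdelta.
  have [hr2|hr2] := leP (alpha + del) r.
    by apply: (@tail_far_up R alpha eps U L t x r H hr); rewrite hdelta.
  by exfalso; apply: hN; rewrite /N /= in_itv /= hr1 hr2.
have IB := @integral_bound R mu (tail_given U L t) N e h01 mf mN (ltW (expR_gt0 _)) hf hfe.
rewrite /tail_prob.
set Tm := t%:R `^ (xi * (eta - 1) / 2).
have he : e <= Tm.
  move: g2; rewrite /e hx2 mul1r /Tm.
  by rewrite (_ : - (xi * (1 - eta) / 2) = xi * (eta - 1) / 2) //; field.
have mA : Num.min (alpha - a0) (b0 - alpha) <= alpha - a0 by rewrite ge_min lexx.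
have mB : Num.min (alpha - a0) (b0 - alpha) <= b0 - alpha by rewrite ge_min lexx orbT.
have dl : del <= 2 * eps0 by rewrite /del; lra.
have e4 : eps0 * 4 = Num.min (alpha - a0) (b0 - alpha) by rewrite /eps0 divfK.
have hN : fine (mu N) <= c * 4 `^ xi * Tm.
  have lt : alpha - del <= alpha + del by lra.
  apply: le_trans (@mu_oo_cdf R mu _ _ lt) _.
  have hh := hold (alpha + del) (alpha - del).
  have i1 : a0 < alpha + del < b0 by apply/andP; split; lra.
  have i2 : a0 < alpha - del < b0 by apply/andP; split; lra.
  apply: le_trans (le_trans (ler_norm _) (hh i1 i2)) _.
  rewrite (_ : alpha + del - (alpha - del) = 4 * t%:R `^ rho); last by rewrite /del; ring.
  rewrite ger0_norm ?mulr_ge0 ?powR_ge0 //.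
  rewrite powRM ?powR_ge0 // -powRrM -mulrA (_ : rho * xi = xi * (eta - 1) / 2) //.
  by rewrite /rho; field.
move: IB => /andP[I0 I1]; apply/andP; split => //.
apply: le_trans I1 _.
have Tm0 : 0 <= Tm by rewrite powR_ge0.
rewrite mulrDl mul1r; lra.
Qed.

Theorem lemma3 (R : realType) (alpha epsl : R) (eps : nat -> R)
  (U L : nat -> int) (lam q : R) (T : nat)
  (mu : probability R R) (xi : R) :
  0 < alpha < 1 ->
  0 < epsl <= 4^-1 ->
  (* spending sequence *)
  0 <= eps 0%N -> (forall t, eps t <= eps t.+1) -> (eps @ \oo --> epsl)%classic ->
  is_boundaries alpha eps U L ->
  0 < lam -> 0 < q -> (0 < T)%N ->
  (forall t : nat, (T <= t)%N -> lam * (t%:R `^ (- q)) <= eps t - eps t.-1) ->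
  (* p is [0,1]-valued with distribution mu *)
  mu `[0, 1]%classic = 1%E ->
  (* the CDF of p is Hoelder continuous with exponent xi > 0 near alpha *)
  0 < xi ->
  (exists a b c : R, [/\ a < alpha < b, 0 < c &
     forall x y : R, a < x < b -> a < y < b ->
       `|cdf_of mu x - cdf_of mu y| <= c * `|x - y| `^ xi]) ->
  (forall eta : R, 0 < eta < 1 ->
     exists (kappa : R) (Tt : nat), forall t : nat, (Tt <= t)%N ->
       tail_prob mu U L t <=
         2 * expR (- 2 * (t%:R `^ eta)) + kappa * t%:R `^ (xi * (eta - 1) / 2))
  /\
  (forall d : R, - (xi / 2) < d ->
     (fun t : nat => tail_prob mu U L t / t%:R `^ d) @ \oo --> (0 : R))%classic.
Proof.
move=> hal _ he0 _ _ Hb lam0 q0 _ hinc h01 xi0 hold.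
have Core := @core R alpha eps U L lam q T mu xi hal he0 Hb lam0 q0 hinc h01 xi0 hold.
split.
  move=> eta heta; have [K [K0 [N hN]]] := Core eta heta.
  exists K, N => t ht; have /andP[_ h] := hN t ht.
  apply: le_trans h _; rewrite lerDr; apply: mulr_ge0 => //; exact: expR_ge0.
move=> d hd.
set w := (2 * d + xi) / xi.
have w0 : 0 < w by rewrite /w divr_gt0 //; lra.
set eta := Num.min (1/2) (w/2).
have heta : 0 < eta < 1.
  apply/andP; split; first by rewrite lt_min; apply/andP; split; lra.
  have : eta <= 1/2 by rewrite ge_min lexx.
  lra.
have etaw : eta <= w / 2 by rewrite ge_min lexx orbT.
have [K [K0 [N hN]]] := Core eta heta.
set ee := d - xi * (eta - 1) / 2.
have ee0 : 0 < ee.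
  have h1 : xi * (eta - 1) < xi * (w - 1) by rewrite ltr_pM2l //; lra.
  have h2 : xi * (w - 1) = 2 * d by rewrite /w; field; rewrite gt_eqF.
  rewrite /ee; lra.
apply/cvgrPdist_le => e e0.
have K1 : 0 < K + 1 by lra.
have [M hM] := @ev_powneg R ee (e / (K + 1)) ee0 (divr_gt0 e0 K1).
exists (maxn (maxn N M) 1) => // t /= ht.
have htN : (N <= t)%N by rewrite geq_max in ht; case/andP: ht; rewrite geq_max => /andP[].
have htM : (M <= t)%N by rewrite geq_max in ht; case/andP: ht; rewrite geq_max => /andP[].
have ht1 : (1 <= t)%N by rewrite geq_max in ht; case/andP: ht.
have tp : (0 : R) < t%:R by rewrite ltr0n.
have /andP[P0 P1] := hN t htN.
have dp : 0 < t%:R `^ d by rewrite powR_gt0.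
rewrite sub0r normrN ger0_norm ?divr_ge0 ?powR_ge0 //.
have hE : t%:R `^ (xi * (eta - 1) / 2) / t%:R `^ d = t%:R `^ (- ee).
  rewrite -powRB; last by apply/implyP => _; rewrite gt_eqF.
  by congr powR; rewrite /ee; ring.
apply: le_trans (_ : K * t%:R `^ (xi * (eta - 1) / 2) / t%:R `^ d <= _).
  by rewrite ler_pM2r ?invr_gt0.
rewrite -mulrA hE.
have := hM t htM => hp.
have : K * t%:R `^ (- ee) <= K * (e / (K + 1)) by rewrite ler_wpM2l.
move=> h; apply: le_trans h _.
rewrite mulrA ler_pdivrMr //; nra.
Qed.
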